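(* The winding fraction satisfies: (a) $\mathrm{wf}(\overrightarrow G)>0$ if and only if $\overrightarrow G$ has a directed cycle. (b) If there is a cyclic homomorphism $\overrightarrow G\to\overrightarrow H$ then $\mathrm{wf}(\overrightarrow G)\le\mathrm{wf}(\overrightarrow H)$. (c) If $X\subseteq S^1$ is finite and $0<r<\frac12$ then $\mathrm{wf}_{\le}(X;r)\le r$, $\mathrm{wf}_{<}(X;r)<r$, and $\mathrm{wf}_{<}(X;r)\le\mathrm{wf}_{\le}(X;r)$. (d) $\mathrm{wf}(\overrightarrow{C_n^k})=\frac kn$ for all integers $0\le k<\frac n2$.
   Context: A directed graph is a finite pair $(V,E)$, $E\subseteq V\times V$, with no loops and never both $(v,w),(w,v)\in E$; write $v\to w$. A directed cycle is a sequence $v_1,\dots,v_s$ with $v_i\to v_{i+1}$ (indices mod $s$). A cyclic graph is a directed graph with a cyclic vertex order $v_0\prec\cdots\prec v_{n-1}$ (indices mod $n$) such that $v_i\to v_j$ implies $j=i+1$ or both $v_i\to v_{j-1}$ and $v_{i+1}\to v_j$. For three elements of a cyclic order $x_0\prec\cdots\prec x_{n-1}$, $x_i\prec x_j\prec x_k$ means $i<j<k$ or $k<i<j$ or $j<k<i$; subintervals are $\emptyset$, $\{x_i,\dots,x_j\}$ ($i\le j$) and $\{x_j,\dots,x_{n-1},x_0,\dots,x_i\}$ ($i<j$). A map $f$ is cyclic monotone if its fibres are subintervals and $f(s)\prec f(s')\prec f(s'')$ implies $s\prec s'\prec s''$. A cyclic homomorphism of cyclic graphs is a cyclic monotone vertex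 map $f$ such that each edge $v\to w$ has $f(v)=f(w)$ or $f(v)\to f(w)$, and $f$ is non-constant if the source has a directed cycle. $\overrightarrow{C_n^k}$ ($0\le k<n/2$): vertices $\{0,\dots,n-1\}$, $i\to j$ iff $0<(j-i)\bmod n\le k$. $\mathrm{wf}(\overrightarrow G)=\sup\{k/n:\exists\text{ cyclic homomorphism }\overrightarrow{C_n^k}\to\overrightarrow G\}$. $S^1$ is the circle of circumference $1$ with points in $[0,1)$ and clockwise distance $\vec d(x,y)$; for finite $X\subseteq S^1$ and $0<r<\frac12$, $\overrightarrow{\mathbf{VR}}_{\le}(X;r)$ (resp. $\overrightarrow{\mathbf{VR}}_{<}(X;r)$) is the directed graph on $X$ with $x_1\to x_2$ iff $0<\vec d(x_1,x_2)\le r$ (resp. $<r$), cyclic with respect to the clockwise order; $\mathrm{wf}_{\le}(X;r)$ and $\mathrm{wf}_{<}(X;r)$ are their winding fractions. *)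

(* Defs.v *)
From HB Require Import structures.
From mathcomp Require Import all_boot all_order all_algebra.
From mathcomp Require Import boolp classical_sets reals.
Set Implicit Arguments. Unset Strict Implicit. Unset Printing Implicit Defensive.
Import Order.TTheory GRing.Theory Num.Theory.

(* A cyclic graph with n vertices is encoded on the vertex type 'I_n, the
   cyclic vertex order being v_0 < v_1 < ... < v_{n-1} (indices mod n).
   The edge relation is [adj : rel 'I_n] (adj v w  means  v -> w). *)

Definition is_digraph (n : nat) (adj : rel 'I_n) : Prop :=
  (forall v, ~~ adj v v) /\ (forall v w, adj v w -> ~~ adj w v).

Definition is_cyclic_graph (n : nat) (adj : rel 'I_n) : Prop :=
  is_digraph adj /\
  forall i j : 'I_n, adj i j ->
    j = ordS i \/ (adj i (ord_pred j) /\ adj (ordS i) j).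

Definition has_directed_cycle (n : nat) (adj : rel 'I_n) : Prop :=
  exists s : seq 'I_n, s != [::] /\ cycle adj s.

Definition cbetween (i j k : nat) : bool :=
  [|| (i < j < k)%N, (k < i < j)%N | (j < k < i)%N].

Definition is_subinterval (m : nat) (A : {pred 'I_m}) : Prop :=
  (forall x, x \notin A) \/
  (exists i j : nat, (i <= j)%N /\ forall x : 'I_m, (x \in A) = (i <= x <= j)%N) \/
  (exists i j : nat, (i < j)%N /\
     (forall x : 'I_m, (x \in A) = ((j <= x)%N && (x < m)%N) || (x <= i)%N)).

Definition cyclic_monotone (m n : nat) (f : 'I_m -> 'I_n) : Prop :=
  (forall y : 'I_n, is_subinterval [pred x | f x == y]) /\
  (forall s s' s'' : 'I_m, cbetween (f s) (f s') (f s'') -> cbetween s s' s'').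

Definition cyclic_hom (m n : nat) (adjG : rel 'I_m) (adjH : rel 'I_n)
    (f : 'I_m -> 'I_n) : Prop :=
  cyclic_monotone f /\
  (forall v w, adjG v w -> f v = f w \/ adjH (f v) (f w)) /\
  (has_directed_cycle adjG -> exists v w, f v <> f w).

Definition Cnk (n k : nat) : rel 'I_n :=
  fun i j => (0 < (j + n - i) %% n <= k)%N.
Arguments Cnk : clear implicits.

Local Open Scope ring_scope.
Arguments cyclic_hom {m n} adjG adjH f.

Definition wf (R : realType) (n : nat) (adj : rel 'I_n) : R :=
  sup [set x : R | exists (m k : nat) (f : 'I_m -> 'I_n),
         (k.*2 < m)%N /\ cyclic_hom (Cnk m k) adj f /\ x = k%:R / m%:R].
Arguments wf R {n} adj.

(* S^1 = [0,1); clockwise distance from x to y *)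
Definition cwdist (R : realType) (x y : R) : R :=
  if 0 <= y - x then y - x else y - x + 1.

(* a finite X in S^1 is given by a duplicate-free sequence of points of [0,1);
   its vertices are listed in increasing (= clockwise) order *)
Definition on_circle (R : realType) (X : seq R) : Prop :=
  uniq X /\ all (fun x => (0 <= x) && (x < 1)) X.

Definition cpt (R : realType) (X : seq R) (i : nat) : R :=
  nth 0 (sort <=%R X) i.

Definition VR_le (R : realType) (X : seq R) (r : R) : rel 'I_(size X) :=
  fun i j => (0 < cwdist (cpt X i) (cpt X j)) && (cwdist (cpt X i) (cpt X j) <= r).

Definition VR_lt (R : realType) (X : seq R) (r : R) : rel 'I_(size X) :=
  fun i j => (0 < cwdist (cpt X i) (cpt X j)) && (cwdist (cpt X i) (cpt X j) < r).

Arguments VR_le {R} X r.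
Arguments VR_lt {R} X r.

Definition wf_le (R : realType) (X : seq R) (r : R) : R := wf R (VR_le X r).
Definition wf_lt (R : realType) (X : seq R) (r : R) : R := wf R (VR_lt X r).
Arguments wf_le {R} X r.
Arguments wf_lt {R} X r.

(* Main.v *)
Require Import Defs.
From HB Require Import structures.
From mathcomp Require Import all_boot all_order all_algebra.
From mathcomp Require Import boolp classical_sets reals.
From mathcomp Require Import zify ring lra.
Import Order.TTheory GRing.Theory Num.Theory.
Set Implicit Arguments. Unset Strict Implicit. Unset Printing Implicit Defensive.


Lemma mod2 (y n : nat) : (y < n + n)%N ->
  ((y < n)%N /\ (y %% n)%N = y) \/ ((n <= y)%N /\ (y %% n)%N = (y - n)%N).
Proof.
move=> h; case: (ltnP y n) => hy; [left; split=> //; exact: modn_small|right; split=> //].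
have -> : y = ((y - n) + n)%N by rewrite subnK.
by rewrite modnDr modn_small ?addnK //; lia.
Qed.

Ltac kmod :=
  repeat match goal with H : context [(_ %% _)%N] |- _ => revert H end;
  repeat match goal with
  | |- context [ (?y %% ?n)%N ] =>
      lazymatch y with context [(_ %% _)%N] => fail | _ => idtac end;
      let H := fresh in have H := @mod2 y n ltac:(lia); move: H; generalize (y %% n)%N; intros ? ?
  end; intros.

Ltac ords := repeat match goal with x : 'I_ _ |- _ =>
  let H := fresh "Hx" in have H := ltn_ord x; move: H; move: (nat_of_ord x) => ?; clear x; intro end.

Definition D n (a b : 'I_n) : nat := ((b + n - a) %% n)%N.

Lemma D_lt n (a b : 'I_n) : (D a b < n)%N.
Proof. by rewrite /D ltn_mod; case: n a b => [[]|]. Qed.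

Lemma D_eq0 n (a b : 'I_n) : (D a b == 0)%N = (a == b).
Proof.
rewrite /D -(inj_eq val_inj) /=; have := ltn_ord a; have := ltn_ord b.
move: (nat_of_ord a) (nat_of_ord b) => x y ? ?; apply/eqP/eqP => ?; kmod; lia.
Qed.

Lemma D_inj n (a b c : 'I_n) : D a b = D a c -> b = c.
Proof.
rewrite /D => h; apply: val_inj => /=; move: h; have := ltn_ord a; have := ltn_ord b; have := ltn_ord c.
move: (nat_of_ord a) (nat_of_ord b) (nat_of_ord c) => x y z ? ? ? ?; kmod; lia.
Qed.

Lemma D_pred n (a b : 'I_n) : a != b -> D a (ord_pred b) = (D a b).-1.
Proof.
rewrite /D -(inj_eq val_inj) /=; have := ltn_ord a; have := ltn_ord b.
move: (nat_of_ord a) (nat_of_ord b) => x y ? ? ?; kmod; lia.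
Qed.

Lemma D_succL n (a b : 'I_n) : a != b -> D (ordS a) b = (D a b).-1.
Proof.
rewrite /D -(inj_eq val_inj) /=; have := ltn_ord a; have := ltn_ord b.
move: (nat_of_ord a) (nat_of_ord b) => x y ? ? ?; kmod; lia.
Qed.

Lemma D_succ n (a : 'I_n) : D a (ordS a) = (1 %% n)%N.
Proof.
rewrite /D /=; have := ltn_ord a.
move: (nat_of_ord a) => x ?; kmod; lia.
Qed.

Lemma fwd n (adj : rel 'I_n) : is_cyclic_graph adj ->
  forall u w : 'I_n, adj u w -> forall z : 'I_n,
  (0 < D u z < D u w)%N -> adj u z /\ adj z w.
Proof.
move=> [[irr asym] cyc].
suff H : forall d (u w : 'I_n), (D u w <= d)%N -> adj u w -> forall z : 'I_n,
   (0 < D u z < D u w)%N -> adj u z /\ adj z w.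
  by move=> u w uw z; apply: H (leqnn _) uw z.
elim=> [|d IH] u w hd uw z hz; first lia.
have uw' : u != w by apply: contraTneq uw => ->; apply: irr.
have uz : u != z by rewrite -D_eq0; lia.
case: (cyc u w uw) => [wS | [h1 h2]].
  by exfalso; move: hz; rewrite wS D_succ; have := leq_mod 1 n; lia.
split.
  have [e|ne] := eqVneq (D u z) (D u w).-1.
    by have -> : z = ord_pred w by apply: (@D_inj _ u); rewrite D_pred.
  have hd' : (D u (ord_pred w) <= d)%N by rewrite D_pred //; lia.
  have hz' : (0 < D u z < D u (ord_pred w))%N by rewrite D_pred //; lia.
  by case: (IH u (ord_pred w) hd' h1 z hz').
have [e|ne] := eqVneq (D u z) 1%N.
  have -> : z = ordS u; last exact: h2.
  apply: (@D_inj _ u); rewrite D_succ e modn_small //; have := D_lt u w; lia.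
have hd' : (D (ordS u) w <= d)%N by rewrite D_succL //; lia.
have hz' : (0 < D (ordS u) z < D (ordS u) w)%N by rewrite !D_succL //; lia.
by case: (IH (ordS u) w hd' h2 z hz').
Qed.


Lemma path_nat (T : Type) (e : rel T) (g : nat -> T) N a :
  path e (g a) [seq g i | i <- iota a.+1 N] = all (fun i => e (g i) (g i.+1)) (iota a N).
Proof. by elim: N a => [|N IH] a //=; rewrite IH. Qed.

Lemma iota_rcons a N : iota a N.+1 = rcons (iota a N) (a + N).
Proof. by rewrite -addn1 iotaD cats1. Qed.

Lemma cycle_nat (T : Type) (e : rel T) (g : nat -> T) N : (0 < N) ->
  g N = g 0 -> (forall i, i < N -> e (g i) (g i.+1)) ->
  cycle e [seq g i | i <- iota 0 N].
Proof.
case: N => // N _ hN he; rewrite /=.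
have -> : rcons [seq g i | i <- iota 1 N] (g 0) = [seq g i | i <- iota 1 N.+1].
  by rewrite iota_rcons map_rcons add1n hN.
rewrite path_nat; apply/allP => i; rewrite mem_iota => /andP [_ h]; apply: he; lia.
Qed.

Definition om m (Hm : 0 < m) (i : nat) : 'I_m := Ordinal (ltn_pmod i Hm).

Lemma om_val m (Hm : 0 < m) (v : 'I_m) : om Hm v = v.
Proof. by apply: val_inj; rewrite /= modn_small. Qed.

Lemma om_m m (Hm : 0 < m) : om Hm m = om Hm 0.
Proof. by apply: val_inj; rewrite /= modnn mod0n. Qed.

Lemma Cnk_om m k (Hm : 0 < m) i j : 0 < j <= k -> j < m -> Cnk m k (om Hm i) (om Hm (i + j)).
Proof.
move=> hj hjm; rewrite /Cnk /= -modnDml.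
have := ltn_pmod i Hm; move: (i %% m) => a ha; kmod; lia.
Qed.

Lemma Cnk_cycle m k : 0 < k -> k.*2 < m -> has_directed_cycle (Cnk m k).
Proof.
move=> hk hkm; have Hm : 0 < m by lia.
exists [seq om Hm i | i <- iota 0 m]; split.
  by case: m hkm Hm.
apply: cycle_nat => //; first exact: om_m.
move=> i _; rewrite -addn1; apply: Cnk_om; lia.
Qed.

Lemma shortcut (T : eqType) (adj : rel T) (p : seq T) (x : T) :
  path (fun a b => (a == b) || adj a b) x p ->
  exists q, [/\ path adj x q, last x q = last x p & (q = [::] -> all (pred1 x) p)].
Proof.
elim: p x => [|y p IH] x /=; first by move=> _; exists [::].
case/andP=> /orP [/eqP <-|hxy] hp; have [q [h1 h2 h3]] := IH _ hp.
  by exists q; split => // /h3 ->; rewrite eqxx.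
by exists (y :: q); split => //=; rewrite hxy.
Qed.

Lemma last_map_iota (T : Type) (g : nat -> T) N a :
  last (g a) [seq g i | i <- iota a.+1 N] = g (a + N).
Proof. by elim: N a => [|N IH] a /=; rewrite ?addn0 // IH addSnnS. Qed.

Lemma hom_cycle n (adj : rel 'I_n) m k (f : 'I_m -> 'I_n) : 0 < k -> k.*2 < m ->
  cyclic_hom (Cnk m k) adj f -> has_directed_cycle adj.
Proof.
move=> hk hkm [mono [he hnc]]; have Hm : 0 < m by lia.
have [v [w hvw]] := hnc (Cnk_cycle hk hkm).
pose g i := f (om Hm i).
have hp : path (fun a b => (a == b) || adj a b) (g 0) [seq g i | i <- iota 1 m].
  rewrite (path_nat _ g m 0); apply/allP => i _; rewrite /g.
  have := he _ _ (@Cnk_om m k Hm i 1 ltac:(lia) ltac:(lia)); rewrite addn1.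
  by case => [->|->]; rewrite ?eqxx ?orbT.
have [q [h1 h2 h3]] := shortcut hp.
have hl : last (g 0) [seq g i | i <- iota 1 m] = g 0.
  by rewrite (last_map_iota g m 0) add0n /g om_m.
case/lastP: q h1 h2 h3 => [|q' y] h1 h2 h3.
  exfalso; have := h3 erefl; rewrite all_map => /allP hall.
  suff hc : forall x : 'I_m, f x = g 0 by apply: hvw; rewrite !hc.
  move=> x; rewrite -(om_val Hm x); case: (posnP x) => [->|hx] //.
  by apply/eqP; apply: (hall x); rewrite mem_iota; have := ltn_ord x; lia.
exists (g 0 :: q'); split => //.
by rewrite /= -[in rcons _ (g 0)]hl -h2 last_rcons.
Qed.

Local Open Scope ring_scope.

Section Cw.
Variable R : realType.
Implicit Types x y z : R.

Lemma cw_wrap x y : cwdist x y = y - x + ((y < x)%R : nat)%:R.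
Proof. rewrite /cwdist subr_ge0; case: (leP x y) => h /=; rewrite ?addr0 //. Qed.

Lemma cw_ge0 x y : 0 <= x < 1 -> 0 <= y < 1 -> 0 <= cwdist x y.
Proof. move=> /andP[? ?] /andP[? ?]; rewrite /cwdist; case: (lerP 0 (y - x)) => h /=; lra. Qed.

Lemma cwxx x : cwdist x x = 0.
Proof. by rewrite /cwdist subrr lexx. Qed.

Lemma cw_add x y z : 0 <= x < 1 -> 0 <= y < 1 -> 0 <= z < 1 ->
  cwdist x y + cwdist y z < 1 -> cwdist x y + cwdist y z = cwdist x z.
Proof.
move=> /andP[? ?] /andP[? ?] /andP[? ?]; rewrite /cwdist.
case: (lerP 0 (y - x)) => h1; case: (lerP 0 (z - y)) => h2; case: (lerP 0 (z - x)) => h3 /=; lra.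
Qed.
End Cw.

Lemma sum_S (R : realType) m (G : nat -> R) :
  \sum_(i < m) G i.+1 = \sum_(i < m) G i + G m - G 0%N.
Proof.
have h1 : \sum_(i < m.+1) G i = G 0%N + \sum_(i < m) G (bump 0 i) := big_ord_recl _ _.
have h2 : \sum_(i < m.+1) G i = \sum_(i < m) G i + G m := big_ord_recr _ _.
have e : \sum_(i < m) G (bump 0 i) = \sum_(i < m) G i.+1 by apply: eq_bigr.
rewrite -e; lra.
Qed.

Lemma sum_shift (R : realType) m (F : nat -> R) l : (forall i, F (i + m)%N = F i) ->
  \sum_(i < m) F (i + l)%N = \sum_(i < m) F i.
Proof.
move=> hF; elim: l => [|l IH]; first by apply: eq_bigr => i _; rewrite addn0.
rewrite -IH; under eq_bigr do rewrite addnS -addSn.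
rewrite (sum_S m (fun i => F (i + l)%N)) addnC hF; lra.
Qed.

Lemma key (R : realType) n (adj : rel 'I_n) (p : 'I_n -> R) (rho : R) :
  (forall v, 0 <= p v < 1) -> 0 <= rho -> rho + rho < 1 ->
  (forall v w, adj v w -> 0 < cwdist (p v) (p w) <= rho) ->
  forall m k (f : 'I_m -> 'I_n), (k.*2 < m)%N -> cyclic_hom (Cnk m k) adj f ->
  k%:R / m%:R <= rho.
Proof.
move=> hp hr0 hr2 hadj m k f hkm hf.
have Hm : (0 < m)%N by lia.
have m0 : (0 < m%:R :> R) by rewrite ltr0n.
case: (posnP k) => [-> | hk]; first by rewrite mul0r.
have hf' := hf; case: hf' => [mono [he hnc]].
have [v [w hvw]] := hnc (Cnk_cycle hk hkm).
pose q i := p (f (om Hm i)).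
have hq i : 0 <= q i < 1 by apply: hp.
have qper i : q (i + m)%N = q i.
  by rewrite /q; congr (p (f _)); apply: val_inj; rewrite /= modnDr.
have hedge i j : (0 < j <= k)%N -> cwdist (q i) (q (i + j)%N) <= rho.
  move=> hj; have := he _ _ (@Cnk_om m k Hm i j hj ltac:(lia)).
  case=> [e|e]; first by rewrite /q e cwxx.
  by case/andP: (hadj _ _ e).
pose d i := cwdist (q i) (q i.+1).
have hd0 i : 0 <= d i by apply: cw_ge0.
have hd1 i : d i <= rho by rewrite /d -addn1; apply: hedge.
have win i j : (j <= k)%N -> \sum_(l < j) d (i + l)%N = cwdist (q i) (q (i + j)%N).
  elim: j => [|j IH] hj; first by rewrite big_ord0 addn0 cwxx.
  rewrite big_ord_recr /= IH; last lia.
  have -> : d (i + j)%N = cwdist (q (i + j)%N) (q (i + j.+1)%N) by rewrite /d addnS.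
  apply: cw_add => //.
  have h1 : cwdist (q i) (q (i + j)%N) <= rho.
    case: (posnP j) => [->|hj0]; first by rewrite addn0 cwxx.
    apply: hedge; lia.
  have h2 : cwdist (q (i + j)%N) (q (i + j.+1)%N) <= rho by have := hd1 (i + j)%N; rewrite /d addnS.
  lra.
have dper i : d (i + m)%N = d i by rewrite /d -addSn !qper.
have hsum : \sum_(i < m) \sum_(l < k) d (i + l)%N = k%:R * \sum_(i < m) d i.
  rewrite exchange_big /=.
  under eq_bigr do rewrite (sum_shift _ dper).
  by rewrite sumr_const card_ord mulr_natl.
have hle : \sum_(i < m) \sum_(l < k) d (i + l)%N <= m%:R * rho.
  under eq_bigr do rewrite win //.
  have -> : m%:R * rho = \sum_(i < m) rho by rewrite sumr_const card_ord mulr_natl.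
  by apply: ler_sum => i _; apply: hedge; lia.
have Tnat : exists N : nat, \sum_(i < m) d i = N%:R.
  exists (\sum_(i < m) ((q i.+1 < q i)%R : nat))%N.
  rewrite natr_sum.
  have -> : \sum_(i < m) d i = \sum_(i < m) (q i.+1 - q i + ((q i.+1 < q i)%R : nat)%:R).
    by apply: eq_bigr => i _; rewrite /d cw_wrap.
  rewrite big_split /=.
  have -> : \sum_(i < m) (q i.+1 - q i) = 0.
    rewrite -(big_mkord xpredT (fun i => q i.+1 - q i)) telescope_sumr //.
    by have := qper 0%N; rewrite add0n => ->; rewrite subrr.
  by rewrite add0r.
have Tpos : 0 < \sum_(i < m) d i.
  case: (pselect (exists i : 'I_m, 0 < d i)) => [[i0 hi0]|hno].
    rewrite (bigD1 i0) //=.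
    have : 0 <= \sum_(i < m | i != i0) d i by apply: sumr_ge0.
    lra.
  exfalso; apply: hvw.
  have step i : (i < m)%N -> f (om Hm i) = f (om Hm i.+1).
    move=> hi; have := he _ _ (@Cnk_om m k Hm i 1 ltac:(lia) ltac:(lia)); rewrite addn1.
    case=> // e; exfalso; apply: hno; exists (Ordinal hi).
    by case/andP: (hadj _ _ e).
  have cst i : (i <= m)%N -> f (om Hm i) = f (om Hm 0).
    elim: i => [|i IH] hi //; rewrite -step; [apply: IH|]; lia.
  by rewrite -(om_val Hm v) -(om_val Hm w) !cst //; apply: ltnW.
have T1 : 1 <= \sum_(i < m) d i.
  case: Tnat Tpos => N ->; rewrite ltr0n ler1n //.
have hk0 : (0 <= k%:R :> R) by [].
rewrite ler_pdivrMr //.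
rewrite hsum in hle; nra.
Qed.

Local Close Scope ring_scope.
Local Open Scope ring_scope.
Local Open Scope classical_set_scope.

Definition wfset (R : realType) n (adj : rel 'I_n) : set R :=
  [set x : R | exists (m k : nat) (f : 'I_m -> 'I_n),
         (k.*2 < m)%N /\ cyclic_hom (Cnk m k) adj f /\ x = k%:R / m%:R].
Arguments wfset R {n} adj.

Lemma wfE (R : realType) n (adj : rel 'I_n) : wf R adj = sup (wfset R adj).
Proof. by []. Qed.

Section SupL.
Variable R : realType.

Lemma wfset01 n (adj : rel 'I_n) (x : R) : wfset R adj x -> 0 <= x <= 1.
Proof.
move=> [m [k [f [hkm [_ ->]]]]]; have m0 : (0 < m%:R :> R) by rewrite ltr0n; lia.
rewrite divr_ge0 //= ler_pdivrMr // mul1r ler_nat; lia.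
Qed.

Lemma sup_le01 (A : set R) rho : 0 <= rho -> (forall x, A x -> x <= rho) -> sup A <= rho.
Proof.
move=> h0 h; case: (pselect (A !=set0)) => [ne|e]; first exact: ge_sup.
have -> : A = set0 by apply/seteqP; split => x //= Ax; apply: e; exists x.
by rewrite sup0.
Qed.

Lemma sup_ge (A : set R) x : (forall y, A y -> y <= 1) -> A x -> x <= sup A.
Proof. by move=> h Ax; apply: ub_le_sup => //; exists 1 => y /h. Qed.

Lemma sup_ge0 (A : set R) : (forall y, A y -> 0 <= y <= 1) -> 0 <= sup A.
Proof.
move=> h; case: (pselect (A !=set0)) => [[x Ax]|e].
  apply: (le_trans (proj1 (andP (h x Ax)))); apply: sup_ge Ax.
  by move=> y /h /andP[].
have -> : A = set0 by apply/seteqP; split => x //= Ax; apply: e; exists x.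
by rewrite sup0.
Qed.

Lemma sup_mono (A B : set R) : A `<=` B -> (forall y, B y -> 0 <= y <= 1) -> sup A <= sup B.
Proof.
move=> AB h; apply: sup_le01; first exact: sup_ge0.
by move=> x /AB Bx; apply: sup_ge Bx => y /h /andP[].
Qed.
End SupL.

Lemma max_below (R : realType) (T : finType) (F : T -> R) (r : R) : 0 < r ->
  exists rho, [/\ r / 2 <= rho, rho < r & forall t, F t < r -> F t <= rho].
Proof.
move=> r0.
suff : forall s : seq T, exists rho, [/\ r / 2 <= rho, rho < r & forall t, t \in s -> F t < r -> F t <= rho].
  by case/(_ (enum T)) => rho [h1 h2 h3]; exists rho; split => // t; apply: h3; rewrite mem_enum.
elim=> [|t s [rho [h1 h2 h3]]]; first by exists (r / 2); split => //; lra.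
case: (boolP (F t < r)) => ht.
  case: (lerP (F t) rho) => hl.
    exists rho; split => // u; rewrite inE => /orP [/eqP ->|/h3] //.
  exists (F t); split => //; first lra.
  move=> u; rewrite inE => /orP [/eqP ->|hu hr] //; have := h3 u hu hr; lra.
exists rho; split => // u; rewrite inE => /orP [/eqP ->|/h3] //.
by rewrite (negbTE ht).
Qed.

Lemma cpt_range (R : realType) (X : seq R) (v : 'I_(size X)) : on_circle X -> 0 <= cpt X v < 1.
Proof.
move=> [_ hall]; have : cpt X v \in X.
  by rewrite /cpt -(mem_sort <=%R) mem_nth // size_sort.
by move/(allP hall).
Qed.

Lemma partc (R : realType) (X : seq R) (r : R) : on_circle X -> 0 < r -> r < 1 / 2 ->
  [/\ wf_le X r <= r, wf_lt X r < r & wf_lt X r <= wf_le X r].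
Proof.
move=> hX r0 r2; split.
- rewrite /wf_le wfE; apply: sup_le01; first exact: ltW.
  move=> x [m [k [f [hkm [hf ->]]]]].
  apply: (@key R (size X) (VR_le X r) (cpt X) r _ _ _ _ m k f hkm hf).
  + by move=> v; apply: cpt_range.
  + exact: ltW.
  + lra.
  + by move=> v w /andP [h1 h2]; rewrite h1 h2.
- have [rho [h1 h2 h3]] := max_below (fun ij : 'I_(size X) * 'I_(size X) => cwdist (cpt X ij.1) (cpt X ij.2)) r0.
  apply: (le_lt_trans _ h2); rewrite /wf_lt wfE; apply: sup_le01; first lra.
  move=> x [m [k [f [hkm [hf ->]]]]].
  apply: (@key R (size X) (VR_lt X r) (cpt X) rho _ _ _ _ m k f hkm hf).
  + by move=> v; apply: cpt_range.
  + lra.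
  + lra.
  + move=> v w /andP [ha hb]; rewrite ha /=; exact: (h3 (v, w) hb).
- rewrite /wf_lt /wf_le !wfE; apply: sup_mono; last by move=> y; apply: wfset01.
  move=> x [m [k [f [hkm [[mono [he hnc]] ->]]]]]; exists m, k, f; split => //; split => //.
  split => //; split => // v w /he [->|/andP [ha hb]]; [by left | right].
  by rewrite /VR_le ha ltW.
Qed.

Lemma cw_frac (R : realType) n (v w : 'I_n) :
  cwdist (v%:R / n%:R : R) (w%:R / n%:R) = (D v w)%:R / n%:R.
Proof.
have n0 : (0 < n%:R :> R) by rewrite ltr0n; have := ltn_ord v; lia.
have hD : ((v <= w)%N /\ D v w = w - v)%N \/ ((w < v)%N /\ D v w = w + n - v)%N.
  rewrite /D; have := ltn_ord v; have := ltn_ord w.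
  move: (nat_of_ord v) (nat_of_ord w) => a b ? ?; kmod; lia.
rewrite /cwdist -mulrBl.
case: hD => [[h ->]|[h ->]].
  by rewrite ifT ?natrB //; apply: divr_ge0 => //; rewrite subr_ge0 ler_nat.
rewrite ifF; last first.
  by apply/negbTE; rewrite -ltNge ltr_pdivrMr // mul0r subr_lt0 ltr_nat.
rewrite natrB; last by have := ltn_ord v; lia.
rewrite natrD; field; exact: lt0r_neq0.
Qed.

Lemma partd (R : realType) n k : (k.*2 < n)%N -> wf R (Cnk n k) = k%:R / n%:R.
Proof.
move=> hkn; have n0 : (0 < n%:R :> R) by rewrite ltr0n; lia.
apply/le_anti/andP; split.
  rewrite wfE; apply: sup_le01; first by apply: divr_ge0.
  move=> x [m [l [f [hlm [hf ->]]]]].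
  apply: (@key R n (Cnk n k) (fun v => v%:R / n%:R) (k%:R / n%:R) _ _ _ _ m l f hlm hf).
  + by move=> v; rewrite divr_ge0 //= ltr_pdivrMr // mul1r ltr_nat.
  + exact: divr_ge0.
  + by rewrite -mulrDl ltr_pdivrMr // mul1r -natrD ltr_nat; lia.
  + move=> v w h; rewrite cw_frac; move: h; rewrite /Cnk -/(D v w) => /andP [h1 h2].
    have hD0 : (0 < (D v w)%:R :> R) by rewrite ltr0n.
    rewrite divr_gt0 //= ler_pdivrMr // -mulrA mulVf ?mulr1 ?ler_nat //; exact: lt0r_neq0.
rewrite wfE; apply: sup_ge; first by move=> y /wfset01 /andP[].
exists n, k, id; split => //; split => //; split.
  split => //.
  move=> y; right; left; exists y, y; split => // x; rewrite inE /=.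
  by rewrite -(inj_eq val_inj) /= eqn_leq andbC.
split; first by move=> v w h; right.
move=> [s [hs hc]]; case: s hs hc => // x s _ hc.
exists x, (next (x :: s) x) => e.
by have := next_cycle hc (mem_head x s); rewrite -e /Cnk addKn modnn.
Qed.

Local Close Scope classical_set_scope.
Local Close Scope ring_scope.

Lemma D_le n (x y z : 'I_n) :
  ((x < z <= y) || ((y < x) && ((x < z) || (z <= y)))) -> D x z <= D x y.
Proof.
rewrite /D; have := ltn_ord x; have := ltn_ord y; have := ltn_ord z.
move: (nat_of_ord x) (nat_of_ord y) (nat_of_ord z) => a b c ? ? ? ?; kmod; lia.
Qed.

Ltac clearall := repeat match goal with H : _ |- _ => clear H end.

Definition leo n (x y : 'I_n) := x <= y.

Lemma parta_fwd n (adj : rel 'I_n) : is_cyclic_graph adj -> has_directed_cycle adj ->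
  exists t (f : 'I_t -> 'I_n), 2 < t /\ cyclic_hom (Cnk t 1) adj f.
Proof.
move=> hcg [s [hs hcyc]].
have [[irr asym] _] := hcg.
case: s hs hcyc => // x0 s0 _ hcyc.
pose c := sort (@leo n) (undup (x0 :: s0)).
have memc : forall x, (x \in c) = (x \in x0 :: s0) by move=> x; rewrite mem_sort mem_undup.
have uc : uniq c by rewrite sort_uniq undup_uniq.
have sc : sorted (@leo n) c by apply: sort_sorted => x y; apply: leq_total.
clearbody c.
have hx0 : x0 \in x0 :: s0 := mem_head _ _.
move: (x0 :: s0) hcyc memc hx0 => s hcyc memc hx0.
have nx : forall x, x \in s -> adj x (next s x) by move=> x; apply: next_cycle.
have nxs : forall x, x \in s -> next s x \in s by move=> x; rewrite mem_next.
have nxne : forall x, x \in s -> next s x != x.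
  by move=> x hx; apply: contraTneq (nx x hx) => ->; apply: irr.
have ht : 2 < size c.
  have : x0 \in c by rewrite memc.
  case: c memc uc sc => [|a [|b [|? ?]]] // memc uc _ _.
    have ha : a \in s by rewrite -memc mem_head.
    have := nxs a ha; rewrite -memc inE => /eqP e.
    by have := nxne a ha; rewrite e eqxx.
  have ha : a \in s by rewrite -memc mem_head.
  have hb : b \in s by rewrite -memc !inE eqxx orbT.
  have e1 : next s a = b.
    have := nxs a ha; rewrite -memc !inE => /orP [/eqP e|/eqP //].
    by have := nxne a ha; rewrite e eqxx.
  have e2 : next s b = a.
    have := nxs b hb; rewrite -memc !inE => /orP [/eqP //|/eqP e].
    by have := nxne b hb; rewrite e eqxx.
  have h1 := nx a ha; have h2 := nx b hb; rewrite e1 in h1; rewrite e2 in h2.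
  by have := asym _ _ h1; rewrite h2.
have lt_nth : forall i j, i < j < (size c) -> nth x0 c i < nth x0 c j.
  move=> i j /andP [hij hjt].
  have hle : (@leo n) (nth x0 c i) (nth x0 c j).
    apply: (sorted_ltn_nth (leT:=@leo n)) => //.
    - by move=> ? ? ?; apply: leq_trans.
    - by rewrite inE; lia.
  have hne : nth x0 c i != nth x0 c j.
    by rewrite nth_uniq //; [rewrite neq_ltn hij | exact: ltn_trans hij hjt].
  by rewrite ltn_neqAle (inj_eq val_inj) hne; exact: hle.
pose f : 'I_(size c) -> 'I_n := fun i => nth x0 c i.
have mono : forall a b : 'I_(size c), (f a < f b) = (a < b).
  move=> a b; case: (ltngtP a b) => h.
  - by apply: lt_nth; rewrite h ltn_ord.
  - by apply/negbTE; rewrite -leqNgt ltnW //; apply: lt_nth; rewrite h ltn_ord.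
  - have -> : a = b by apply: val_inj.
    by rewrite ltnn.
have monole : forall a b : 'I_(size c), (f a <= f b) = (a <= b) by move=> a b; rewrite leqNgt mono -leqNgt.
have finj : injective f.
  move=> a b /eqP; rewrite /f nth_uniq // => /eqP h; exact: val_inj.
have memf : forall y, y \in s -> exists j : 'I_(size c), f j = y.
  move=> y hy; have hi : index y c < (size c) by rewrite index_mem memc.
  by exists (Ordinal hi); rewrite /f nth_index // memc.
have edge : forall i : 'I_(size c), adj (f i) (f (ordS i)).
  move=> i; set x := f i; set z := f (ordS i).
  have hx : x \in s by rewrite -memc mem_nth.
  have [j hj] := memf _ (nxs x hx).
  have hxy := nx x hx; rewrite -hj in hxy.
  have yx : f j != x by rewrite hj; exact: nxne.
  have ji : j != i by apply: contraNneq yx => ->.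
  have zx : z != x.
    apply/eqP => /finj /(congr1 val) /=; have := ltn_ord i; move=> hi.
    case: (ltnP i.+1 (size c)) => h; first by rewrite modn_small // => /esym /n_Sn.
    have e1 : i.+1 = (size c) by move: h hi; clearall; lia.
    by rewrite e1 modnn => e; move: e e1 ht; clearall; lia.
  have hDle : D x z <= D x (f j).
    apply: D_le; rewrite /x /z.
    case: (ltnP i.+1 (size c)) => hi.
      have ei : (ordS i : nat) = i.+1 by rewrite /= modn_small.
      case: (ltngtP j i) => hji.
      - by rewrite !mono ei ltnSn hji /= orbT.
      - by rewrite mono ei ltnSn /= monole ei hji.
      - by exfalso; move: ji; rewrite -(inj_eq val_inj) /= hji eqxx.
    have ei : (ordS i : nat) = 0 by rewrite /= (_ : i.+1 = (size c)) ?modnn //; move: (ltn_ord i) hi; clearall; lia.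
    have hji : j < i.
      rewrite -(inj_eq val_inj) in ji; move: (ltn_ord j) (ltn_ord i) hi ji => /= + + + /eqP; clearall; lia.
    by rewrite !mono monole ei hji leq0n /= ?orbT.
  move: hDle; rewrite leq_eqVlt => /orP [/eqP e|hlt].
    by rewrite (D_inj e).
  have h0 : 0 < D x z by rewrite lt0n D_eq0 eq_sym.
  by case: (fwd hcg hxy (z:=z)) => //; rewrite h0 hlt.
exists (size c), f; split => //; split; [split|split].
- move=> y; case: (pselect (exists a, f a == y)) => [[a /eqP ha]|hno].
    right; left; exists a, a; split => // x; rewrite inE /=.
    by rewrite -ha (inj_eq finj) -(inj_eq val_inj) eqn_leq andbC.
  by left => x; rewrite inE /=; apply/negP => /eqP e; apply: hno; exists x; rewrite e.
- by move=> a b d; rewrite /cbetween !mono.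
- move=> v w; rewrite /Cnk -/(D v w) => h; right.
  have -> : w = ordS v; last exact: edge.
  by apply: (@D_inj _ v); rewrite D_succ (modn_small (ltnW ht)); move: h (D_lt v w); clearall; lia.
- move=> _; exists (Ordinal (ltn_trans (ltnSn 0) (ltnW ht))), (Ordinal (ltnW ht)).
  by move/finj/(congr1 val).
Qed.


Lemma NNPP (P : Prop) : ~ ~ P -> P.
Proof. by case: (pselect P) => // h /(_ h). Qed.

Lemma exmin m (P : pred 'I_m) : (exists x, P x) -> exists i, P i /\ forall x, P x -> i <= x.
Proof.
case=> x0 px0; case: (arg_minnP (fun x : 'I_m => nat_of_ord x) px0) => i pi hi.
by exists i.
Qed.

Lemma exmax m (P : pred 'I_m) : (exists x, P x) -> exists i, P i /\ forall x, P x -> x <= i.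
Proof.
case=> x0 px0; case: (arg_maxnP (fun x : 'I_m => nat_of_ord x) px0) => i pi hi.
by exists i.
Qed.

Lemma mem_neq m (A : {pred 'I_m}) (x y : 'I_m) : x \in A -> y \notin A -> (x : nat) <> y.
Proof. by move=> hx hy e; move: hy; rewrite -(val_inj e) hx. Qed.

Definition noalt m (A : {pred 'I_m}) := forall a a' b b' : 'I_m,
  a \in A -> a' \in A -> b \notin A -> b' \notin A -> cbetween a b a' -> cbetween a' b' a -> False.

Lemma sub_noalt m (A : {pred 'I_m}) : is_subinterval A -> noalt A.
Proof.
move=> hA a a' b b' ha ha' hb hb'; rewrite /cbetween.
case: hA => [h|[[i [j [hij h]]]|[i [j [hij h]]]]].
- by move: (h a); rewrite ha.
- move: ha ha' hb hb'; rewrite !h; have := ltn_ord a; have := ltn_ord b;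
  have := ltn_ord a'; have := ltn_ord b'; clearall; lia.
- move: ha ha' hb hb'; rewrite !h; have := ltn_ord a; have := ltn_ord b;
  have := ltn_ord a'; have := ltn_ord b'; clearall; lia.
Qed.

Lemma noalt_sub m (A : {pred 'I_m}) : noalt A -> is_subinterval A.
Proof.
move=> hna.
case: (pselect (exists x, x \in A)) => [ne|e]; last first.
  by left => x; apply/negP => hx; apply: e; exists x.
have [i [hi imin]] := exmin ne; have [j [hj jmax]] := exmax ne.
case: (pselect (exists b : 'I_m, (i < b < j) && (b \notin A))) => [[b /andP [hb1 hb2]]|hall].
  have cpl : forall b' : 'I_m, b' \notin A -> i < b' < j.
    move=> b' hb'.
    have ib := mem_neq hi hb'; have jb := mem_neq hj hb'.
    case: (ltnP i b') => h1; case: (ltnP b' j) => h2 //;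
      exfalso; apply: (hna i j b b' hi hj hb2 hb') => //; rewrite /cbetween;
      move: hb1 h1 h2 ib jb; clearall; lia.
  have ne' : exists x, x \notin A by exists b.
  have [p [hp pmin]] := exmin ne'; have [q [hq qmax]] := exmax ne'.
  have hin : forall x : 'I_m, p <= x <= q -> x \notin A.
    move=> x /andP [h1 h2]; apply/negP => hx.
    have hpi := cpl p hp; have hqi := cpl q hq.
    have px : p != x by apply: contraNneq hp => ->.
    have qx : q != x by apply: contraNneq hq => ->.
    rewrite -(inj_eq val_inj) in px; rewrite -(inj_eq val_inj) in qx.
    apply: (hna i x p q hi hx hp hq); rewrite /cbetween; move: px qx hpi hqi h1 h2 => /= /eqP + /eqP; clearall; lia.
  right; right; exists p.-1, q.+1; split.
    have := cpl p hp; have := cpl q hq; have := pmin q hq; clearall; lia.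
  move=> x; apply/idP/idP.
    move=> hx; have : ~~ (p <= x <= q) by apply: contraL hx; exact: hin.
    have := cpl p hp; have := ltn_ord x; clearall; lia.
  move=> hx; apply/negPn/negP => hnx; have := pmin x hnx; have := qmax x hnx; have := cpl p hp.
  move: hx; clearall; lia.
right; left; exists i, j; split.
  exact: imin.
move=> x; apply/idP/idP.
  by move=> hx; rewrite imin // jmax.
move=> hx; apply/negPn/negP => hnx; apply: hall; exists x; rewrite hnx andbT.
have := mem_neq hi hnx; have := mem_neq hj hnx.
move: hx; clearall; lia.
Qed.

Lemma cb_anti (a b c : nat) : cbetween a b c -> cbetween c b a -> False.
Proof. rewrite /cbetween; clearall; lia. Qed.

Lemma cb_tri (a b c : nat) : a <> b -> b <> c -> a <> c -> cbetween a b c || cbetween c b a.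
Proof. rewrite /cbetween; clearall; lia. Qed.

Lemma oneq n (x y : 'I_n) : x <> y -> (x : nat) <> y.
Proof. by move=> h e; apply: h; apply: val_inj. Qed.

Lemma comp_mono m n p (f : 'I_m -> 'I_n) (g : 'I_n -> 'I_p) :
  cyclic_monotone f -> cyclic_monotone g -> cyclic_monotone (fun x => g (f x)).
Proof.
move=> [ff fb] [gf gb]; split; last by move=> s s' s'' /gb /fb.
move=> z; apply: noalt_sub => a a' b b'; rewrite !inE /= => /eqP ha /eqP ha' /eqP hb /eqP hb' c1 c2.
case: (eqVneq (f a) (f a')) => e.
  apply: (sub_noalt (ff (f a)) (a:=a) (a':=a') (b:=b) (b':=b')) => //; rewrite ?inE ?e //.
  - by apply/negP => /eqP h; apply: hb; rewrite h ?ha ?ha'.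
  - by apply/negP => /eqP h; apply: hb'; rewrite h ?ha ?ha'.
have nab : f a <> f b by move=> h; apply: hb; rewrite -h.
have na'b : f a' <> f b by move=> h; apply: hb; rewrite -h.
have nab' : f a <> f b' by move=> h; apply: hb'; rewrite -h.
have na'b' : f a' <> f b' by move=> h; apply: hb'; rewrite -h.
have naa' : f a <> f a' by apply/eqP.
have h1 : cbetween (f a) (f b) (f a').
  case/orP: (cb_tri (oneq nab) (oneq (nesym na'b)) (oneq naa')) => // /fb h.
  by exfalso; apply: cb_anti c1 h.
have h2 : cbetween (f a') (f b') (f a).
  case/orP: (cb_tri (oneq na'b') (oneq (nesym nab')) (oneq (nesym naa'))) => // /fb h.
  by exfalso; apply: cb_anti c2 h.
apply: (sub_noalt (gf z) (a:=f a) (a':=f a') (b:=f b) (b':=f b')) => //; rewrite !inE /=.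
- by rewrite ha.
- by rewrite ha'.
- by apply/eqP.
- by apply/eqP.
Qed.

Lemma addD n (a b : 'I_n) : (a + D a b) %% n = b.
Proof.
rewrite /D; have := ltn_ord a; have := ltn_ord b.
move: (nat_of_ord a) (nat_of_ord b) => x y ? ?; kmod; lia.
Qed.

Lemma D_of n (a b : 'I_n) e : e < n -> (a + e) %% n = b -> D a b = e.
Proof.
rewrite /D; have := ltn_ord a; have := ltn_ord b.
move: (nat_of_ord a) (nat_of_ord b) => x y ? ? ?; kmod; lia.
Qed.

Lemma comp_nc m n p (adjG : rel 'I_n) (adjH : rel 'I_p) k (f : 'I_m -> 'I_n) (g : 'I_n -> 'I_p) :
  is_cyclic_graph adjG -> is_digraph adjH -> 0 < k -> k.*2 < m ->
  cyclic_hom (Cnk m k) adjG f -> cyclic_hom adjG adjH g ->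
  exists v w, g (f v) <> g (f w).
Proof.
move=> hG [_ asymH] hk hkm hf [gm [ge gnc]].
have [v0 [w0 hvw0]] := gnc (hom_cycle hk hkm hf).
apply: NNPP => hno.
have hall : forall v w, g (f v) = g (f w).
  by move=> v w; apply: NNPP => h; apply: hno; exists v, w.
have Hm : 0 < m by lia.
have [fm [fe fnc]] := hf.
have [v1 [w1 hvw1]] := fnc (Cnk_cycle hk hkm).
pose w i := f (om Hm i).
pose c := g (w 0).
have hc : forall i, g (w i) = c by move=> i; apply: hall.
have W1 : forall i, w i = w i.+1 \/ adjG (w i) (w i.+1).
  by move=> i; have := fe _ _ (@Cnk_om m k Hm i 1 ltac:(lia) ltac:(lia)); rewrite addn1.
pose del i := D (w i) (w i.+1).
pose S j := \sum_(i < j) del i.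
have SS : forall j, S j.+1 = S j + del j by move=> j; rewrite /S big_ord_recr.
have W2 : forall j, (w 0 + S j) %% n = w j.
  elim=> [|j IH]; first by rewrite /S big_ord0 addn0 modn_small.
  by rewrite SS addnA -modnDml IH addD.
have W3 : exists i : 'I_m, w i != w i.+1.
  apply: NNPP => hn; apply: hvw1.
  have step : forall i, i < m -> w i = w i.+1.
    move=> i hi; apply/eqP; apply: NNPP => h; apply: hn; exists (Ordinal hi); exact/negP.
  have cst : forall i, i <= m -> w i = w 0.
    elim=> [|i IH] hi //; rewrite -step; [apply: IH|]; lia.
  by rewrite -(om_val Hm v1) -(om_val Hm w1); have := cst v1 (ltnW (ltn_ord _));
    have := cst w1 (ltnW (ltn_ord _)); rewrite /w => -> ->.
have Spos : 0 < S m.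
  case: W3 => i0 hi0; rewrite /S (bigD1 i0) //=.
  have : 0 < del i0 by rewrite /del lt0n D_eq0.
  lia.
have Sn : n <= S m.
  apply: dvdn_leq => //; rewrite /dvdn.
  have := W2 m; rewrite /w om_m -/(w 0) => e.
  have : (w 0 + S m == w 0 + 0 %[mod n]) by rewrite e addn0 modn_small.
  by rewrite eqn_modDl mod0n.
have main : forall z : 'I_n, forall j, j <= m -> D (w 0) z <= S j -> g z = c.
  move=> z; elim=> [|j IH] hj ht.
    move: ht; rewrite /S big_ord0 leqn0 D_eq0 => /eqP <-; exact: hc.
  case: (leqP (D (w 0) z) (S j)) => h1; first by apply: IH => //; lia.
  rewrite SS in ht.
  case: (eqVneq (D (w 0) z) (S j + del j)) => h2.
    have -> : z = w j.+1; last exact: hc.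
    by apply: val_inj; rewrite /= -W2 SS -h2 addD.
  have h3 : D (w 0) z < S j + del j by rewrite ltn_neqAle h2 ht.
  have hd0 : 0 < del j by lia.
  have hne : w j != w j.+1 by rewrite -D_eq0 -lt0n.
  have hadj : adjG (w j) (w j.+1) by case: (W1 j) => // e; move: hne; rewrite e eqxx.
  have hDz : D (w j) z = D (w 0) z - S j.
    apply: D_of; first by have := D_lt (w j) (w j.+1); rewrite -/(del j); lia.
    by rewrite -W2 modnDml -addnA subnKC ?addD //; lia.
  have [e1 e2] := fwd hG hadj (z:=z) ltac:(rewrite hDz -/(del j); lia).
  case: (ge _ _ e1) => [<-|a1]; first exact: hc.
  case: (ge _ _ e2) => [->|a2]; first exact: hc.
  by exfalso; rewrite hc in a1; rewrite hc in a2; have := asymH _ _ a1; rewrite a2.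
apply: hvw0; rewrite (main v0 m (leqnn m)) ?(main w0 m (leqnn m)) //.
- by have := D_lt (w 0) w0; lia.
- by have := D_lt (w 0) v0; lia.
Qed.

Local Open Scope ring_scope.
Local Open Scope classical_set_scope.

Lemma parta (R : realType) n (adj : rel 'I_n) : is_cyclic_graph adj ->
  (0 < wf R adj <-> has_directed_cycle adj).
Proof.
move=> hcg; split.
  rewrite wfE => h.
  case: (pselect (exists x, wfset R adj x /\ 0 < x)) => [[x [[m [k [f [hkm [hf ex]]]]] hx]]|hno].
    case: (posnP k) => [k0|hk]; first by move: hx; rewrite ex k0 mul0r ltxx.
    exact: (hom_cycle hk hkm hf).
  exfalso; move: h; apply/negP; rewrite -leNgt; apply: sup_le01 => // x hx.
  by rewrite leNgt; apply/negP => hx0; apply: hno; exists x.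
move/(parta_fwd hcg) => [t [f [ht hf]]].
have t0 : (0 < t%:R :> R) by rewrite ltr0n; lia.
have hx : wfset R adj (1%:R / t%:R) by exists t, 1%N, f; split => //; lia.
apply: (lt_le_trans _ (sup_ge _ hx)); first by apply: divr_gt0 => //; rewrite ltr0n.
by move=> y /wfset01 /andP[].
Qed.

Lemma partb (R : realType) m n (adjG : rel 'I_m) (adjH : rel 'I_n) (f : 'I_m -> 'I_n) :
  is_cyclic_graph adjG -> is_cyclic_graph adjH -> cyclic_hom adjG adjH f ->
  wf R adjG <= wf R adjH.
Proof.
move=> hG [hH _] hf.
rewrite !wfE; apply: sup_mono; last by move=> y; apply: wfset01.
move=> x [m' [k [h [hkm [hh ->]]]]]; exists m', k, (fun x => f (h x)); split => //; split => //.
have [hm [he hnc]] := hh; have [fm [fe fnc]] := hf.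
split; first exact: comp_mono.
split.
  move=> v w /he [->|e]; first by left.
  by case: (fe _ _ e) => [->|e']; [left|right].
move=> [s [hs hc]].
case: (posnP k) => [k0|hk].
  exfalso; case: s hs hc => // x0 s _ hc.
  by have := next_cycle hc (mem_head x0 s); rewrite k0 /Cnk; case: (_ %% _)%N.
exact: (comp_nc hG hH hk hkm hh hf).
Qed.

Local Close Scope classical_set_scope.
Local Close Scope ring_scope.
Unset Implicit Arguments.
Local Open Scope ring_scope.

Theorem proposition3p8 (R : realType) :
  (* (a) *)
  (forall (n : nat) (adj : rel 'I_n), is_cyclic_graph adj ->
     (0 < wf R adj <-> has_directed_cycle adj)) /\
  (* (b) *)
  (forall (m n : nat) (adjG : rel 'I_m) (adjH : rel 'I_n) (f : 'I_m -> 'I_n),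
     is_cyclic_graph adjG -> is_cyclic_graph adjH -> cyclic_hom adjG adjH f ->
     wf R adjG <= wf R adjH) /\
  (* (c) *)
  (forall (X : seq R) (r : R), on_circle X -> 0 < r -> r < 1 / 2 ->
     [/\ wf_le X r <= r, wf_lt X r < r & wf_lt X r <= wf_le X r]) /\
  (* (d) *)
  (forall n k : nat, (k.*2 < n)%N -> wf R (Cnk n k) = k%:R / n%:R).
Proof.
split; first by move=> n adj; apply: parta.
split; first by move=> m n adjG adjH f; apply: partb.
split; first by move=> X r; apply: partc.
by move=> n k; apply: partd.
Qed.
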